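(* The matrix $$U_5=\tfrac12 S_0\otimes\left(I_2\otimes I_2+\sigma_1\otimes\sigma_1+\sigma_2\otimes\sigma_2+\sigma_3\otimes\sigma_3\right)+S_3\otimes I_2\otimes\sigma_1$$ on $\mathbb{C}^2\otimes\mathbb{C}^2\otimes\mathbb{C}^2$ is unitary and $\mathrm{sr}(U_5)=5$.
   Context: $S_0=\begin{bmatrix}1&0\\0&0\end{bmatrix}$, $S_1=\begin{bmatrix}0&1\\0&0\end{bmatrix}$, $S_2=\begin{bmatrix}0&0\\1&0\end{bmatrix}$, $S_3=\begin{bmatrix}0&0\\0&1\end{bmatrix}$. $I_2$ is the $2\times2$ identity and $\sigma_1=\begin{bmatrix}0&1\\1&0\end{bmatrix}$, $\sigma_2=\begin{bmatrix}0&-i\\i&0\end{bmatrix}$, $\sigma_3=\begin{bmatrix}1&0\\0&-1\end{bmatrix}$ are the Pauli matrices. For a matrix $U$ on $\mathbb{C}^2\otimes\mathbb{C}^2\otimes\mathbb{C}^2$ (systems $A,B,C$), its Schmidt rank $\mathrm{sr}(U)$ is the least integer $r$ such that $U=\sum_{j=1}^r A_j\otimes B_j\otimes C_j$ with $A_j,B_j,C_j$ complex $2\times 2$ matrices (i.e. the tensor rank of $U$). *)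

(* Defs.v *)
From HB Require Import structures.
From mathcomp Require Import all_boot all_order all_algebra.
From mathcomp Require Import reals.
From mathcomp.real_closed Require Import complex mxtens.
Set Implicit Arguments. Unset Strict Implicit. Unset Printing Implicit Defensive.
Import Order.TTheory GRing.Theory Num.Theory.
Local Open Scope ring_scope.

Section Defs.
Variable R : realType.
Local Notation C := (R[i]).

Definition S0 : 'M[C]_2 := \matrix_(i < 2, j < 2) ((i == 0 :> nat) && (j == 0 :> nat))%:R.
Definition S1 : 'M[C]_2 := \matrix_(i < 2, j < 2) ((i == 0 :> nat) && (j == 1 :> nat))%:R.
Definition S2 : 'M[C]_2 := \matrix_(i < 2, j < 2) ((i == 1 :> nat) && (j == 0 :> nat))%:R.
Definition S3 : 'M[C]_2 := \matrix_(i < 2, j < 2) ((i == 1 :> nat) && (j == 1 :> nat))%:R.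
Definition I2 : 'M[C]_2 := 1%:M.
Definition sigma1 : 'M[C]_2 := S1 + S2.
Definition sigma2 : 'M[C]_2 := (- 'i) *: S1 + 'i *: S2.
Definition sigma3 : 'M[C]_2 := S0 - S3.

Definition tens3 (A B D : 'M[C]_2) : 'M[C]_(2 * 2 * 2) := (A *t B) *t D.

Definition adjmx n (U : 'M[C]_n) : 'M[C]_n := map_mx Num.conj U^T.
Definition unitary n (U : 'M[C]_n) : Prop :=
  U *m adjmx U = 1%:M /\ adjmx U *m U = 1%:M.

Definition has_tens_decomp (U : 'M[C]_(2 * 2 * 2)) (r : nat) : Prop :=
  exists (A B D : 'I_r -> 'M[C]_2), U = \sum_(j < r) tens3 (A j) (B j) (D j).

Definition schmidt_rank_eq (U : 'M[C]_(2 * 2 * 2)) (r : nat) : Prop :=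
  has_tens_decomp U r /\ forall r', (r' < r)%N -> ~ has_tens_decomp U r'.

Definition U5 : 'M[C]_(2 * 2 * 2) :=
  2^-1 *: tens3 S0 I2 I2 + 2^-1 *: tens3 S0 sigma1 sigma1
  + 2^-1 *: tens3 S0 sigma2 sigma2 + 2^-1 *: tens3 S0 sigma3 sigma3
  + tens3 S3 I2 sigma1.
End Defs.

(* Main.v *)
Require Import Defs.
From HB Require Import structures.
From mathcomp Require Import all_boot all_order all_algebra.
From mathcomp Require Import reals.
From mathcomp.real_closed Require Import complex mxtens.
Set Implicit Arguments. Unset Strict Implicit. Unset Printing Implicit Defensive.
Import Order.TTheory GRing.Theory Num.Theory.
Local Open Scope ring_scope.

Section S.
Variable R : realType.
Local Notation C := (R[i]).

Lemma core n (P Q X W Y : 'M[C]_n) (al be : 'I_n -> C) (x : 'I_n -> 'I_n -> C) :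
  X = \matrix_(k,j) (al j * x k j) -> W = \matrix_(k,j) (be j * x k j) ->
  P *m P = 1%:M -> Q *m (P *m Q) = 0 -> P = X *m Y^T -> Q = W *m Y^T -> Q = 0.
Proof.
move=> HX HW PP QPQ HP HQ.
set Z := Y^T *m P.
have XZ : X *m Z = 1%:M by rewrite /Z mulmxA -HP PP.
have ZX : Z *m X = 1%:M by apply: mulmx1C.
have ZXE : forall j l, \sum_k Z j k * (al l * x k l) = (j == l)%:R.
  move=> j l; have := congr1 (fun A : 'M[C]_n => A j l) ZX; rewrite !mxE => <-.
  by apply: eq_bigr => k _; rewrite HX mxE.
have al0 : forall l, al l != 0.
  move=> l; apply/eqP => a0; have := ZXE l l; rewrite eqxx big1 ?oner_eq0.
    by move/eqP; rewrite eq_sym oner_eq0.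
  by move=> k _; rewrite a0 mul0r mulr0.
set G := Z *m W.
have XG : X *m G = W by rewrite /G mulmxA XZ mul1mx.
pose d := \row_l (be l / al l).
have Gd : G = diag_mx d.
  apply/matrixP => j l; rewrite /G !mxE.
  transitivity ((be l / al l) * \sum_k Z j k * (al l * x k l)).
    rewrite mulr_sumr; apply: eq_bigr => k _; rewrite HW mxE.
    by rewrite [RHS]mulrCA !mulrA mulfVK //; apply: al0.
  by rewrite ZXE; have [->|ne] := eqVneq j l; rewrite ?eqxx ?(negbTE ne) ?mulr1 ?mulr0 ?mulr1n ?mulr0n.
have H0 : W *m Z *m W = 0.
  have := congr1 (mulmx^~ (P *m X)) QPQ; rewrite mul0mx HQ => H.
  by rewrite -[W *m Z *m W]mulmx1 -ZX /Z -H !mulmxA.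
have GG : G *m G = 0.
  by rewrite /G -[_ *m (Z *m W)]mulmxA [W *m (Z *m W)]mulmxA H0 mulmx0.
have d0 : forall l, d 0 l = 0.
  move=> l; have := congr1 (fun A : 'M[C]_n => A l l) GG; rewrite Gd mul_diag_mx !mxE eqxx mulr1n.
  by move/eqP; rewrite mulf_eq0 orbb => /eqP.
have G0 : G = 0.
  rewrite Gd; apply/matrixP => j l; rewrite !mxE; have [->|ne] := eqVneq j l.
    by have := d0 l; rewrite mxE => ->; rewrite mul0rn.
  by rewrite mulr0n.
by rewrite HQ -XG G0 mulmx0 mul0mx.
Qed.

Lemma pad r (M : 'M[C]_(2*2*2)) : (r <= 4)%N -> has_tens_decomp M r -> has_tens_decomp M 4.
Proof.
move=> le [A [B [D ->]]].
pose f (S : 'I_r -> 'M[C]_2) (j : 'I_4) : 'M[C]_2 :=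
  if (insub (val j) : option 'I_r) is Some k then S k else 0.
pose G (k : nat) : 'M[C]_(2*2*2) :=
  if (insub k : option 'I_r) is Some j then tens3 (A j) (B j) (D j) else 0.
exists (f A), (f B), (f D).
transitivity (\sum_(i < r) G i).
  by apply: eq_bigr => j _; rewrite /G valK.
rewrite (big_ord_widen 4 G le) big_mkcond; apply: eq_bigr => j _; rewrite /f /G.
case: insubP => [k Hk _|Hk]; first by rewrite Hk.
by rewrite (negbTE Hk) /tens3 !tens0mx.
Qed.
Definition idx3 (a b c : 'I_2) : 'I_(2*2*2) := mxtens_index (mxtens_index (a,b), c).

Lemma tens3E (A B D : 'M[C]_2) a b c a' b' c' :
  tens3 A B D (idx3 a b c) (idx3 a' b' c') = A a a' * B b b' * D c c'.
Proof. by rewrite /tens3 /idx3 !tensmxE. Qed.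

Definition u5f (a b c a' b' c' : 'I_2) : C :=
  ((a == a' :> nat) && (if (a == 0 :> nat) then (b == c' :> nat) && (c == b' :> nat)
   else (b == b' :> nat) && (c != c' :> nat)))%:R.

Lemma idx3P (P : 'I_(2*2*2) -> Prop) : (forall a b c, P (idx3 a b c)) -> forall i, P i.
Proof. by move=> H i; case: (mxtens_indexP i) => ab c; case: (mxtens_indexP ab) => a b; apply: H. Qed.

Lemma idx2_eq m n (a a' : 'I_m) (b b' : 'I_n) :
  (mxtens_index (a,b) == mxtens_index (a',b')) = (a == a') && (b == b').
Proof. by rewrite (inj_eq (can_inj (@mxtens_indexK _ _))) xpair_eqE. Qed.

Lemma idx3_eq a b c a' b' c' : (idx3 a b c == idx3 a' b' c') = [&& a == a', b == b' & c == c'].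
Proof. by rewrite /idx3 !idx2_eq andbA. Qed.

Lemma sum_tens m n (F : 'I_(m*n) -> C) :
  \sum_k F k = \sum_i \sum_j F (mxtens_index (i,j)).
Proof.
rewrite pair_big /= (reindex (@mxtens_index m n)) /=; last first.
  by exists (@mxtens_unindex m n) => x _; [apply: mxtens_indexK | apply: mxtens_unindexK].
by apply: eq_bigr => -[i j].
Qed.

Lemma sum8 (F : 'I_(2*2*2) -> C) :
  \sum_k F k = \sum_a \sum_b \sum_c F (idx3 a b c).
Proof. by rewrite [LHS]sum_tens [LHS]sum_tens. Qed.

Ltac cases6 a b c a' b' c' :=
  case: a => [[|[|//]] ?]; case: b => [[|[|//]] ?]; case: c => [[|[|//]] ?];
  case: a' => [[|[|//]] ?]; case: b' => [[|[|//]] ?]; case: c' => [[|[|//]] ?].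

Lemma U5E a b c a' b' c' : U5 R (idx3 a b c) (idx3 a' b' c') = u5f a b c a' b' c'.
Proof.
rewrite /U5 !mxE /idx3 !mxtens_indexK /= /u5f.
have ii : 'i * 'i = -1 :> C by rewrite -expr2 sqrCi.
have h2 : 2^-1 + 2^-1 = 1 :> C.
  by rewrite [RHS](splitr 1) mul1r.
case: a => [[|[|//]] ?]; case: b => [[|[|//]] ?]; case: c => [[|[|//]] ?];
case: a' => [[|[|//]] ?]; case: b' => [[|[|//]] ?]; case: c' => [[|[|//]] ?];
rewrite /= ?(mulNr, mulrN, opprK, ii, mulr0, mul0r, mulr1, mul1r, addr0, add0r, subr0, sub0r, oppr0, subrr, h2) //.
Qed.

Section M.
Variable M : 'M[C]_(2*2*2).
Hypothesis HM : forall a b c a' b' c', M (idx3 a b c) (idx3 a' b' c') = u5f a b c a' b' c'.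

Lemma adjM : adjmx M = M.
Proof.
apply/matrixP => i j; elim/idx3P: i => a b c; elim/idx3P: j => a' b' c'.
rewrite /adjmx !mxE HM HM /u5f conjC_nat; congr (_%:R).
by cases6 a b c a' b' c'.
Qed.

Lemma MM : M *m M = 1%:M.
Proof.
apply/matrixP => i j; elim/idx3P: i => a b c; elim/idx3P: j => a' b' c'.
rewrite !mxE sum8 !big_ord_recl !big_ord0 !HM /u5f !addr0 -!natrM -!natrD idx3_eq.
congr (_%:R).
by cases6 a b c a' b' c'.
Qed.

Lemma M5 : has_tens_decomp M 5.
Proof.
exists (fun j => nth 0 [:: S0 R; S0 R; S0 R; S0 R; S3 R] j),
       (fun j => nth 0 [:: S0 R; S1 R; S2 R; S3 R; I2 R] j),
       (fun j => nth 0 [:: S0 R; S2 R; S1 R; S3 R; sigma1 R] j).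
apply/matrixP => i j; elim/idx3P: i => a b c; elim/idx3P: j => a' b' c'.
rewrite HM summxE !big_ord_recl big_ord0 !tens3E /= /u5f /sigma1 !mxE addr0 -!natrM -!natrD.
rewrite -!natrM -!natrD; congr (_%:R).
by cases6 a b c a' b' c'.
Qed.


Definition Mslice (a : 'I_2) : 'M[C]_(2*2) :=
  \matrix_(k, l) M (idx3 a (@mxtens_unindex 2 2 k).1 (@mxtens_unindex 2 2 l).1)
                   (idx3 a (@mxtens_unindex 2 2 k).2 (@mxtens_unindex 2 2 l).2).

Lemma MsE a b b' c c' :
  Mslice a (mxtens_index (b,b')) (mxtens_index (c,c')) = u5f a b c a b' c'.
Proof. by rewrite mxE !mxtens_indexK HM. Qed.

Lemma mul4 (A B : 'M[C]_(2*2)) i j :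
  (A *m B) i j = A i (mxtens_index (ord0, ord0)) * B (mxtens_index (ord0, ord0)) j
    + A i (mxtens_index (ord0, lift ord0 ord0)) * B (mxtens_index (ord0, lift ord0 ord0)) j
    + A i (mxtens_index (lift ord0 ord0, ord0)) * B (mxtens_index (lift ord0 ord0, ord0)) j
    + A i (mxtens_index (lift ord0 ord0, lift ord0 ord0))
        * B (mxtens_index (lift ord0 ord0, lift ord0 ord0)) j.
Proof. by rewrite mxE sum_tens !big_ord_recl !big_ord0 !addr0 !addrA. Qed.

Lemma F1 : Mslice ord0 *m Mslice ord0 = 1%:M.
Proof.
apply/matrixP => i j; case: (mxtens_indexP i) => b b'; case: (mxtens_indexP j) => c c'.
rewrite mul4 !MsE [RHS]mxE idx2_eq /u5f -!natrM -!natrD. apply/eqP; rewrite eqr_nat; apply/eqP.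
by case: b => [[|[|//]] ?]; case: b' => [[|[|//]] ?]; case: c => [[|[|//]] ?]; case: c' => [[|[|//]] ?].
Qed.

Definition o1 : 'I_2 := lift ord0 ord0.

Lemma F2 : Mslice o1 *m (Mslice ord0 *m Mslice o1) = 0.
Proof.
apply/matrixP => i j; case: (mxtens_indexP i) => b b'; case: (mxtens_indexP j) => c c'.
rewrite mul4 !mul4 !MsE [RHS]mxE /u5f -!natrM -!natrD -!natrM -!natrD; apply/eqP; rewrite pnatr_eq0; apply/eqP.
by case: b => [[|[|//]] ?]; case: b' => [[|[|//]] ?]; case: c => [[|[|//]] ?]; case: c' => [[|[|//]] ?].
Qed.

Lemma F3 : Mslice o1 != 0.
Proof.
apply/eqP => H.
have := congr1 (fun A : 'M[C]_(2*2) => A (mxtens_index (ord0, ord0)) (mxtens_index (ord0, o1))) H.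
by rewrite /= MsE mxE /u5f /= => /eqP; rewrite oner_eq0.
Qed.

Lemma no4 : ~ has_tens_decomp M 4.
Proof.
move=> [A [B [D HD]]].
pose un := @mxtens_unindex 2 2.
have sl : forall a, Mslice a =
   (\matrix_(k, j) (A j a a * B j (un k).1 (un k).2)) *m (\matrix_(l, j) D j (un l).1 (un l).2)^T.
  move=> a; apply/matrixP => k l; rewrite [LHS]mxE HD summxE [RHS]mxE.
  by apply: eq_bigr => j _; rewrite tens3E !mxE.
apply: (negP F3); apply/eqP.
apply: (@core _ (Mslice ord0) (Mslice o1) _ _ _ (fun j => A j ord0 ord0) (fun j => A j o1 o1)
          (fun k j => B j (un k).1 (un k).2) erefl erefl F1 F2 (sl ord0) (sl o1)).
Qed.

End M.
End S.

Theorem mainTheorem4 (R : realType) :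
  unitary (U5 R) /\ schmidt_rank_eq (U5 R) 5.
Proof.
have HM := @U5E R.
split; first by split; rewrite (adjM HM) (MM HM).
split; first exact: M5 HM.
move=> r lt Hd; apply: (no4 HM); apply: (pad _ Hd); by rewrite -ltnS.
Qed.
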